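(* Let $\mathbf{Grph}=[\mathbb G_1^{\mathrm{op}},\mathbf{Set}]$ and let $\mathsf T$ be the monad on $\mathbf{Grph}$ whose algebras are (small) groupoids. Then $\mathsf T$ is $\Delta_0$-nervous, but its underlying endofunctor is not $\Delta_0$-induced. Consequently $\mathsf T$ does not have arities $\Delta_0$.
   Context: Here $\mathcal V=\mathbf{Set}$. $\mathbb G_1$ is the category freely generated by two parallel arrows $\sigma,\tau\colon 0\rightrightarrows 1$, so $\mathbf{Grph}$ is the category of directed multigraphs. $\Delta_0$ is the full subcategory of $\mathbf{Grph}$ on the graphs $[n]=(0\to 1\to\cdots\to n)$ for $n\ge 0$; it is small and dense, and $K\colon\Delta_0\hookrightarrow\mathbf{Grph}$ denotes the inclusion, with nerve $N_K(X)=\mathbf{Grph}(K-,X)$; a $K$-nerve is a presheaf in its essential image (likewise for other functors $H$ with small domain). The monad $\mathsf T$ is the one induced by the free-forgetful adjunction between groupoids and graphs. For a monad $\mathsf T$, let $\Delta_0\xrightarrow{J_{\mathsf T}}\mathcal A_{\mathsf T}\xrightarrow{K_{\mathsf T}}\mathbf{Grph}^{\mathsf T}$ be the (identity-on-objects, fully faithful) factorisation of $F^{\mathsf T}K$; $\mathsf T$ is $\Delta_0$-nervous if $K_{\mathsf T}$ is dense (i.e. $N_{K_{\mathsf T}}$ fully faithful) and a presheaf $X$ on $\mathcal A_{\mathsf T}$ is a $K_{\mathsf T}$-nerve iff $X\circ J_{\mathsf T}^{\mathrm{op}}$ is a $K$-nerve. An endofunctor $T$ of $\mathbf{Grph}$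 is $\Delta_0$-induced if it is the pointwise left Kan extension along $K$ of $TK$; it has arities $\Delta_0$ if $N_KT$ is the left Kan extension along $K$ of $N_KTK$; a monad has arities $\Delta_0$ if its underlying endofunctor does. *)

(* Defs.v *)
From mathcomp Require Import all_boot.

Set Implicit Arguments.
Unset Strict Implicit.
Unset Printing Implicit Defensive.

(* Directed multigraphs = presheaves on G_1 (a set of vertices, a set  *)
(* of edges, source and target maps) and their morphisms.              *)

Record graph := Graph {
  gV : Type;
  gE : Type;
  gsrc : gE -> gV;
  gtgt : gE -> gV }.

Record ghom (X Y : graph) := GHom {
  hV : gV X -> gV Y;
  hE : gE X -> gE Y;
  hsrc : forall e, gsrc (hE e) = hV (gsrc e);
  htgt : forall e, gtgt (hE e) = hV (gtgt e) }.

Definition gid (X : graph) : ghom X X :=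
  @GHom X X (fun v => v) (fun e => e) (fun _ => erefl) (fun _ => erefl).

Definition gcomp (X Y Z : graph) (g : ghom Y Z) (f : ghom X Y) : ghom X Z :=
  @GHom X Z (fun v => hV g (hV f v)) (fun e => hE g (hE f e))
    (fun e => eq_trans (hsrc g (hE f e)) (f_equal (hV g) (hsrc f e)))
    (fun e => eq_trans (htgt g (hE f e)) (f_equal (hV g) (htgt f e))).

(* The graph [n] = (0 -> 1 -> ... -> n): vertices 0..n, edge i : i -> i+1. *)
Definition gn (n : nat) : graph :=
  @Graph 'I_n.+1 'I_n (fun i => widen_ord (leqnSn n) i) (fun i => lift ord0 i).

(* Small groupoids, presented on their underlying graph (objects =     *)
(* vertices, morphisms = edges).  Composition is a total operation     *)
(* whose value is only constrained on composable pairs.                 *)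

Record groupoid := Groupoid {
  gpd :> graph;
  gpd_id : gV gpd -> gE gpd;
  gpd_comp : gE gpd -> gE gpd -> gE gpd;
  gpd_inv : gE gpd -> gE gpd;
  gpd_id_src : forall x, gsrc (gpd_id x) = x;
  gpd_id_tgt : forall x, gtgt (gpd_id x) = x;
  gpd_comp_src : forall f g, gtgt f = gsrc g -> gsrc (gpd_comp g f) = gsrc f;
  gpd_comp_tgt : forall f g, gtgt f = gsrc g -> gtgt (gpd_comp g f) = gtgt g;
  gpd_compA : forall f g h, gtgt f = gsrc g -> gtgt g = gsrc h ->
      gpd_comp h (gpd_comp g f) = gpd_comp (gpd_comp h g) f;
  gpd_id_l : forall f, gpd_comp (gpd_id (gtgt f)) f = f;
  gpd_id_r : forall f, gpd_comp f (gpd_id (gsrc f)) = f;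
  gpd_inv_src : forall f, gsrc (gpd_inv f) = gtgt f;
  gpd_inv_tgt : forall f, gtgt (gpd_inv f) = gsrc f;
  gpd_inv_l : forall f, gpd_comp (gpd_inv f) f = gpd_id (gsrc f);
  gpd_inv_r : forall f, gpd_comp f (gpd_inv f) = gpd_id (gtgt f) }.

Record gfunctor (G H : groupoid) := GFunctor {
  fh : ghom G H;
  fid : forall x, hE fh (gpd_id x) = gpd_id (hV fh x);
  fcomp : forall f g, gtgt f = gsrc g ->
      hE fh (gpd_comp g f) = gpd_comp (hE fh g) (hE fh f) }.

Definition gfid (G : groupoid) : gfunctor G G :=
  @GFunctor G G (gid G) (fun _ => erefl) (fun _ _ _ => erefl).

Definition gfcomp (G H K : groupoid) (psi : gfunctor H K) (phi : gfunctor G H) :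
  gfunctor G K.
Proof.
refine (@GFunctor G K (gcomp (fh psi) (fh phi)) _ _).
- move=> x /=; rewrite (fid phi) (fid psi); reflexivity.
- move=> f g Hfg /=.
  have H' : gtgt (hE (fh phi) f) = gsrc (hE (fh phi) g)
    by rewrite (htgt (fh phi)) (hsrc (fh phi)) Hfg.
  rewrite (fcomp phi Hfg) (fcomp psi H'); reflexivity.
Defined.

(* The free groupoid on a graph, given by its universal property       *)
(* (left adjoint F to the forgetful functor U : Gpd -> Grph, with unit  *)
(* eta).  The monad T is U F.                                           *)

Record free_groupoid := FreeGroupoid {
  FG : graph -> groupoid;
  fg_eta : forall X : graph, ghom X (FG X);
  fg_ext : forall (X : graph) (G : groupoid), ghom X G -> gfunctor (FG X) G;
  fg_ext_eta : forall (X : graph) (G : groupoid) (f : ghom X G),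
      gcomp (fh (fg_ext f)) (fg_eta X) = f;
  fg_ext_unique : forall (X : graph) (G : groupoid) (f : ghom X G)
      (phi : gfunctor (FG X) G),
      gcomp (fh phi) (fg_eta X) = f -> phi = fg_ext f }.

Section Monad.
Variable F : free_groupoid.

Definition Tob (X : graph) : graph := gpd (FG F X).

Definition Fmap (X Y : graph) (f : ghom X Y) : gfunctor (FG F X) (FG F Y) :=
  @fg_ext F X (FG F Y) (gcomp (fg_eta F Y) f).

Definition Tmap (X Y : graph) (f : ghom X Y) : ghom (Tob X) (Tob Y) :=
  fh (Fmap f).

End Monad.

Record precat := Precat {
  Ob : Type;
  Hom : Ob -> Ob -> Type;
  cid : forall a, Hom a a;
  ccomp : forall a b c, Hom b c -> Hom a b -> Hom a c }.

Record rpsh (C : precat) := RPsh {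
  pob : Ob C -> Type;
  pact : forall a b : Ob C, @Hom C a b -> pob b -> pob a }.

Definition is_presheaf (C : precat) (P : rpsh C) : Prop :=
  (forall a (x : pob P a), pact (cid a) x = x) /\
  (forall a b c (g : @Hom C b c) (f : @Hom C a b) (x : pob P c),
      pact (ccomp g f) x = pact f (pact g x)).

Definition natural (C : precat) (P Q : rpsh C)
    (alpha : forall a, pob P a -> pob Q a) : Prop :=
  forall a b (f : @Hom C a b) (x : pob P b),
    alpha a (pact f x) = pact f (alpha b x).

Definition nat_iso (C : precat) (P Q : rpsh C) : Prop :=
  exists alpha : forall a, pob P a -> pob Q a,
    natural alpha /\ forall a, bijective (alpha a).

(* Delta_0 : full subcategory of Grph on the [n]; K its inclusion. *)
Definition Delta0 : precat :=
  @Precat nat (fun n m => ghom (gn n) (gn m)) (fun n => gid (gn n))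
          (fun a b c g f => gcomp g f).

Definition NK (Z : graph) : rpsh Delta0 :=
  @RPsh Delta0 (fun n => ghom (gn n) Z) (fun a b f x => gcomp x f).

Definition is_K_nerve (P : rpsh Delta0) : Prop :=
  exists Z : graph, nat_iso P (NK Z).

Section Nervous.
Variable F : free_groupoid.

(* A_T : full subcategory of Grph^T (= groupoids) on the free algebras
   F[n]; J_T : Delta_0 -> A_T is F on morphisms; K_T the inclusion. *)
Definition AT : precat :=
  @Precat nat (fun n m => gfunctor (FG F (gn n)) (FG F (gn m)))
          (fun n => gfid (FG F (gn n)))
          (fun a b c g f => gfcomp g f).

Definition JT (n m : nat) (f : ghom (gn n) (gn m)) : @Hom AT n m := Fmap F f.

Definition NKT (G : groupoid) : rpsh AT :=
  @RPsh AT (fun n => gfunctor (FG F (gn n)) G) (fun a b f x => gfcomp x f).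

Definition restrJ (X : rpsh AT) : rpsh Delta0 :=
  @RPsh Delta0 (fun n => pob X n) (fun a b f x => pact (JT f) x).

Definition is_KT_nerve (X : rpsh AT) : Prop :=
  exists G : groupoid, nat_iso X (NKT G).

(* K_T dense: N_{K_T} is fully faithful, i.e. every natural transformation
   N_{K_T} G => N_{K_T} H is N_{K_T} phi for a unique functor phi. *)
Definition KT_dense : Prop :=
  forall (G H : groupoid) (alpha : forall n, pob (NKT G) n -> pob (NKT H) n),
    natural alpha ->
    exists phi : gfunctor G H,
      (forall n x, alpha n x = gfcomp phi x) /\
      (forall phi' : gfunctor G H,
          (forall n x, alpha n x = gfcomp phi' x) -> phi' = phi).

Definition Delta0_nervous : Prop :=
  KT_dense /\
  forall X : rpsh AT, is_presheaf X ->
    (is_KT_nerve X <-> is_K_nerve (restrJ X)).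

(* T is Delta_0-induced: for every graph X, TX together with the maps
   T x : T[n] -> TX (x : [n] -> X) is a colimit of T K over K/X, i.e.
   T is the pointwise left Kan extension of TK along K. *)
Definition Delta0_induced : Prop :=
  forall (X Y : graph) (c : forall n, ghom (gn n) X -> ghom (Tob F (gn n)) Y),
    (forall n m (f : ghom (gn n) (gn m)) (y : ghom (gn m) X),
        c n (gcomp y f) = gcomp (c m y) (Tmap F f)) ->
    exists u : ghom (Tob F X) Y,
      (forall n (x : ghom (gn n) X), gcomp u (Tmap F x) = c n x) /\
      (forall u' : ghom (Tob F X) Y,
          (forall n (x : ghom (gn n) X), gcomp u' (Tmap F x) = c n x) -> u' = u).

(* T has arities Delta_0: N_K T is the (pointwise) left Kan extension of
   N_K T K along K, i.e. for every graph X the presheaf N_K(TX) with the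
   maps N_K(T x) is a colimit in [Delta_0^op, Set] over K/X. *)
Definition has_arities : Prop :=
  forall (X : graph) (Y : rpsh Delta0), is_presheaf Y ->
  forall c : forall n, ghom (gn n) X -> forall k, pob (NK (Tob F (gn n))) k -> pob Y k,
    (forall n x, natural (c n x)) ->
    (forall n m (f : ghom (gn n) (gn m)) (y : ghom (gn m) X) k
            (g : ghom (gn k) (Tob F (gn n))),
        c n (gcomp y f) k g = c m y k (gcomp (Tmap F f) g)) ->
    exists u : forall k, pob (NK (Tob F X)) k -> pob Y k,
      natural u /\
      (forall n (x : ghom (gn n) X) k g, u k (gcomp (Tmap F x) g) = c n x k g) /\
      (forall u' : forall k, pob (NK (Tob F X)) k -> pob Y k,
          natural u' ->
          (forall n (x : ghom (gn n) X) k g, u' k (gcomp (Tmap F x) g) = c n x k g) ->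
          forall k g, u' k g = u k g).

End Nervous.

(* Main.v *)
Require Import Defs.
From mathcomp Require Import all_boot.
From Stdlib Require Import ProofIrrelevance FunctionalExtensionality ClassicalEpsilon.

Set Implicit Arguments.
Unset Strict Implicit.
Unset Printing Implicit Defensive.

Lemma ghom_ext (X Y : graph) (f g : ghom X Y) :
  (forall v, hV f v = hV g v) -> (forall e, hE f e = hE g e) -> f = g.
Proof.
case: f => fV fE fs ft; case: g => gV' gE' gs gt /= HV HE.
have ? : fV = gV' by apply: functional_extensionality.
have ? : fE = gE' by apply: functional_extensionality.
subst; f_equal; apply: proof_irrelevance.
Qed.

Lemma gfunctor_ext (G H : groupoid) (p q : gfunctor G H) : fh p = fh q -> p = q.
Proof.
case: p => p1 p2 p3; case: q => q1 q2 q3 /= E; subst; f_equal; apply: proof_irrelevance.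
Qed.

Definition CodG (V : Type) : graph := @Graph V (V * V) fst snd.

Definition Cod (V : Type) : groupoid.
refine (@Groupoid (CodG V) (fun x => (x, x)) (fun g f => (f.1, g.2))
          (fun f => (f.2, f.1)) _ _ _ _ _ _ _ _ _ _ _) => //.
- by case.
- by case.
Defined.

Lemma cod_thin V (e e' : gE (Cod V)) :
  gsrc e = gsrc e' -> gtgt e = gtgt e' -> e = e'.
Proof. by case: e => a b; case: e' => c d /= -> ->. Qed.

Definition Codmap V W (s : V -> W) : gfunctor (Cod V) (Cod W) :=
  @GFunctor (Cod V) (Cod W)
    (@GHom (CodG V) (CodG W) s (fun p => (s p.1, s p.2)) (fun _ => erefl) (fun _ => erefl))
    (fun _ => erefl) (fun _ _ _ => erefl).

Section GpdLemmas.
Variable G : groupoid.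
Lemma gcompA (f g h : gE G) : gtgt f = gsrc g -> gtgt g = gsrc h ->
      gpd_comp h (gpd_comp g f) = gpd_comp (gpd_comp h g) f.
Proof. exact: gpd_compA. Qed.
End GpdLemmas.

Section Free.
Variable F : free_groupoid.

Local Notation eta X := (fg_eta F X).

Lemma ext_etaV (X : graph) (G : groupoid) (f : ghom X G) v :
  hV (fh (fg_ext F f)) (hV (eta X) v) = hV f v.
Proof. exact: (f_equal (fun h => hV h v) (fg_ext_eta F f)). Qed.

Lemma ext_etaE (X : graph) (G : groupoid) (f : ghom X G) e :
  hE (fh (fg_ext F f)) (hE (eta X) e) = hE f e.
Proof. exact: (f_equal (fun h => hE h e) (fg_ext_eta F f)). Qed.

Lemma gf_eq_eta (X : graph) (G : groupoid) (p q : gfunctor (FG F X) G) :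
  (forall v, hV (fh p) (hV (eta X) v) = hV (fh q) (hV (eta X) v)) ->
  (forall e, hE (fh p) (hE (eta X) e) = hE (fh q) (hE (eta X) e)) -> p = q.
Proof.
move=> HV HE.
rewrite (fg_ext_unique (erefl (gcomp (fh p) (eta X)))).
apply/esym/fg_ext_unique; apply: ghom_ext => /= [v|e]; by rewrite ?HV ?HE.
Qed.

Section PathGpd.
Variable m : nat.
Local Notation T := (FG F (gn m)).
Local Notation etaV := (hV (eta (gn m))).
Local Notation etaE := (hE (eta (gn m))).

Definition Em : gfunctor T (Cod 'I_m.+1) :=
  fg_ext F (G:=Cod 'I_m.+1) (@GHom (gn m) (CodG 'I_m.+1) id
     (fun e => (widen_ord (leqnSn m) e, lift ord0 e)) (fun _ => erefl) (fun _ => erefl)).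

Fixpoint ppath (k : nat) : gE T :=
  match k with
  | 0 => gpd_id (etaV ord0)
  | k'.+1 => match (insub k' : option 'I_m) with
             | Some e => gpd_comp (etaE e) (ppath k')
             | None => ppath k'
             end
  end.

Lemma ppath_st k : k <= m -> gsrc (ppath k) = etaV ord0 /\ gtgt (ppath k) = etaV (inord k).
Proof.
elim: k => [|k IH] Hk /=.
  rewrite gpd_id_src gpd_id_tgt; split => //; congr etaV; apply: val_inj; by rewrite /= inordK.
have Hk' : k < m by [].
rewrite insubT /=.
have [Hs Ht] := IH (ltnW Hk).
have Hc : gtgt (ppath k) = gsrc (etaE (Ordinal Hk')).
  rewrite Ht hsrc; congr etaV; apply: val_inj; rewrite /= inordK //; exact: ltnW.
rewrite gpd_comp_src // gpd_comp_tgt // Hs htgt; split => //.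
congr etaV; apply: val_inj; rewrite /= inordK //.
Qed.

Definition Pedge (p : 'I_m.+1 * 'I_m.+1) : gE T :=
  gpd_comp (ppath p.2) (gpd_inv (ppath p.1)).

Lemma ppath_ord (i : 'I_m.+1) : gsrc (ppath i) = etaV ord0 /\ gtgt (ppath i) = etaV i.
Proof.
have [-> ->] := ppath_st (ltn_ord i : (i : nat) <= m); split => //.
by rewrite inord_val.
Qed.

Lemma Pedge_comp (p : 'I_m.+1 * 'I_m.+1) : gtgt (gpd_inv (ppath p.1)) = gsrc (ppath p.2).
Proof. by rewrite gpd_inv_tgt (ppath_ord p.1).1 (ppath_ord p.2).1. Qed.

Lemma Pedge_src p : gsrc (Pedge p) = etaV p.1.
Proof. by rewrite /Pedge gpd_comp_src ?Pedge_comp // gpd_inv_src (ppath_ord _).2. Qed.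

Lemma Pedge_tgt p : gtgt (Pedge p) = etaV p.2.
Proof. by rewrite /Pedge gpd_comp_tgt ?Pedge_comp // (ppath_ord _).2. Qed.

Definition Pm_h : ghom (CodG 'I_m.+1) T := @GHom (CodG 'I_m.+1) T etaV Pedge Pedge_src Pedge_tgt.

Lemma Pm_id x : hE Pm_h (gpd_id (g0:=Cod 'I_m.+1) x) = gpd_id (hV Pm_h x).
Proof. by rewrite /= /Pedge /= gpd_inv_r (ppath_ord x).2. Qed.

Lemma Pm_comp (f g : gE (Cod 'I_m.+1)) : gtgt f = gsrc g ->
  hE Pm_h (gpd_comp g f) = gpd_comp (hE Pm_h g) (hE Pm_h f).
Proof.
case: f => a b; case: g => c d /= Hbc; subst c.
rewrite /Pedge /=.
have [sa ta] := ppath_ord a; have [sb tb] := ppath_ord b; have [sd td] := ppath_ord d.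
rewrite -(@gcompA T (gpd_comp (ppath b) (gpd_inv (ppath a))) (gpd_inv (ppath b)) (ppath d)); last first.
- by rewrite gpd_inv_tgt sb sd.
- by rewrite gpd_comp_tgt ?gpd_inv_src // gpd_inv_tgt sa sb.
rewrite (@gcompA T (gpd_inv (ppath a)) (ppath b) (gpd_inv (ppath b))); last first.
- by rewrite gpd_inv_src.
- by rewrite gpd_inv_tgt sa sb.
rewrite gpd_inv_l.
have -> : gsrc (ppath b) = gtgt (gpd_inv (ppath a)) by rewrite gpd_inv_tgt sa sb.
by rewrite gpd_id_l.
Qed.

Definition Pm : gfunctor (Cod 'I_m.+1) T := GFunctor Pm_id Pm_comp.

Lemma PE : gfcomp Pm Em = gfid T.
Proof.
apply: gf_eq_eta => [v|e] /=.
  by rewrite (ext_etaV (G:=Cod 'I_m.+1)).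
rewrite (ext_etaE (G:=Cod 'I_m.+1)) /= /Pedge /=.
rewrite add0n valK.
have [s t] : gsrc (ppath e) = etaV ord0 /\ gtgt (ppath e) = etaV (widen_ord (leqnSn m) e)
  := ppath_ord (widen_ord (leqnSn m) e).
rewrite -gcompA; [ | by rewrite gpd_inv_tgt | by rewrite t (hsrc (eta (gn m)) e)].
rewrite gpd_inv_r t -(hsrc (eta (gn m)) e); exact: gpd_id_r.
Qed.


Lemma PE_E f : hE (fh Pm) (hE (fh Em) f) = f.
Proof. exact: (f_equal (fun p => hE (fh p) f) PE). Qed.

Lemma PE_V o : etaV (hV (fh Em) o) = o.
Proof. exact: (f_equal (fun p => hV (fh p) o) PE). Qed.

Lemma Em_etaV i : hV (fh Em) (etaV i) = i.
Proof. exact: (ext_etaV (G:=Cod 'I_m.+1)). Qed.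

Lemma Fthin (f f' : gE T) : gsrc f = gsrc f' -> gtgt f = gtgt f' -> f = f'.
Proof.
move=> Hs Ht; rewrite -(PE_E f) -(PE_E f'); congr (hE _ _).
apply: cod_thin.
  by rewrite (hsrc (fh Em) f) (hsrc (fh Em) f') Hs.
by rewrite (htgt (fh Em) f) (htgt (fh Em) f') Ht.
Qed.

End PathGpd.

Local Notation etaV n := (hV (fg_eta F (gn n))).
Local Notation etaE n := (hE (fg_eta F (gn n))).

Lemma gf_eq_intoF (G : groupoid) m (p q : gfunctor G (FG F (gn m))) :
  (forall v, hV (fh p) v = hV (fh q) v) -> p = q.
Proof.
move=> HV; apply: gfunctor_ext; apply: ghom_ext => // e.
apply: Fthin; by rewrite ?(hsrc (fh p)) ?(hsrc (fh q)) ?(htgt (fh p)) ?(htgt (fh q)) HV.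
Qed.

Lemma gf_eq_FF n m (p q : gfunctor (FG F (gn n)) (FG F (gn m))) :
  (forall i, hV (fh p) (etaV n i) = hV (fh q) (etaV n i)) -> p = q.
Proof. move=> HV; apply: gf_eq_intoF => o; by rewrite -[o](PE_V (m:=n)) HV. Qed.

Definition Th n m (s : 'I_n.+1 -> 'I_m.+1) : gfunctor (FG F (gn n)) (FG F (gn m)) :=
  gfcomp (Pm m) (gfcomp (Codmap s) (Em n)).

Lemma ThV n m (s : 'I_n.+1 -> 'I_m.+1) i : hV (fh (Th s)) (etaV n i) = etaV m (s i).
Proof. by rewrite /= ?Em_etaV. Qed.

Lemma Th_eq n m (s : 'I_n.+1 -> 'I_m.+1) (p : gfunctor (FG F (gn n)) (FG F (gn m))) :
  (forall i, hV (fh p) (etaV n i) = etaV m (s i)) -> p = Th s.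
Proof. move=> H; apply: gf_eq_FF => i; by rewrite ThV H. Qed.

Lemma JT_Th a b (f : ghom (gn a) (gn b)) : Fmap F f = Th (hV f).
Proof. apply: Th_eq => i; by rewrite /Fmap ext_etaV. Qed.

Lemma Th_comp a b c (s : 'I_a.+1 -> 'I_b.+1) (t : 'I_b.+1 -> 'I_c.+1) :
  gfcomp (Th t) (Th s) = Th (fun i => t (s i)).
Proof. apply: Th_eq => i /=. by rewrite !Em_etaV. Qed.

Lemma img_src (G : groupoid) n (p : gfunctor (FG F (gn n)) G) (k : 'I_n) :
  gsrc (hE (fh p) (etaE n k)) = hV (fh p) (etaV n (widen_ord (leqnSn n) k)).
Proof. by rewrite (hsrc (fh p)) (hsrc (fg_eta F (gn n))). Qed.

Lemma img_tgt (G : groupoid) n (p : gfunctor (FG F (gn n)) G) (k : 'I_n) :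
  gtgt (hE (fh p) (etaE n k)) = hV (fh p) (etaV n (lift ord0 k)).
Proof. by rewrite (htgt (fh p)) (htgt (fg_eta F (gn n))). Qed.

Lemma Th_edge a b (s : 'I_a.+1 -> 'I_b.+1) (k : 'I_a) (e : 'I_b) :
  s (widen_ord (leqnSn a) k) = widen_ord (leqnSn b) e -> s (lift ord0 k) = lift ord0 e ->
  hE (fh (Th s)) (etaE a k) = etaE b e.
Proof.
move=> H1 H2; apply: Fthin.
  by rewrite img_src ThV H1 (hsrc (fg_eta F (gn b))).
by rewrite img_tgt ThV H2 (htgt (fg_eta F (gn b))).
Qed.

Lemma I0_False (i : 'I_0) : False.
Proof. by case: i. Qed.

Definition I0_elim (T : Type) (i : 'I_0) : T := False_rect T (I0_False i).

Lemma path_ex (Z : graph) n (v0 : gV Z) (es : nat -> gE Z) :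
  (0 < n -> gsrc (es 0) = v0) -> (forall k, k.+1 < n -> gtgt (es k) = gsrc (es k.+1)) ->
  exists p : ghom (gn n) Z, hV p ord0 = v0 /\ forall e : 'I_n, hE p e = es e.
Proof.
move=> H0 H1.
pose pV := fun i : 'I_n.+1 => match nat_of_ord i with 0 => v0 | k.+1 => gtgt (es k) end.
pose pE := fun e : 'I_n => es e.
have hs : forall e : 'I_n, gsrc (pE e) = pV (widen_ord (leqnSn n) e).
  case=> [[|k] Hk]; rewrite /pE /pV /=; first by apply: H0; exact: leq_ltn_trans Hk.
  by rewrite H1.
have ht : forall e : 'I_n, gtgt (pE e) = pV (lift ord0 e).
  by move=> e; rewrite /pV lift0.
by exists (@GHom (gn n) Z pV pE hs ht).
Qed.

Section Dense.
Variables G H : groupoid.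
Variable alpha : forall n, pob (NKT F G) n -> pob (NKT F H) n.
Hypothesis Hnat : natural alpha.

Definition pt (v : gV G) : ghom (gn 0) G :=
  @GHom (gn 0) G (fun _ => v) (fun e => I0_elim _ e)
    (fun e => False_ind _ (I0_False e)) (fun e => False_ind _ (I0_False e)).

Definition edgV (e : gE G) (i : 'I_2) : gV G :=
  match nat_of_ord i with 0 => gsrc e | _ => gtgt e end.

Lemma edg_s (e : gE G) (k : 'I_1) : gsrc e = edgV e (widen_ord (leqnSn 1) k).
Proof. by case: k => [[|k] Hk]. Qed.

Lemma edg_t (e : gE G) (k : 'I_1) : gtgt e = edgV e (lift ord0 k).
Proof. by rewrite /edgV lift0. Qed.

Definition edg (e : gE G) : ghom (gn 1) G :=
  @GHom (gn 1) G (edgV e) (fun _ => e) (edg_s e) (edg_t e).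

Definition ptF v : gfunctor (FG F (gn 0)) G := fg_ext F (pt v).
Definition edF e : gfunctor (FG F (gn 1)) G := fg_ext F (edg e).

Definition phiV v := hV (fh (@alpha 0 (ptF v))) (etaV 0 ord0).
Definition phiE e := hE (fh (@alpha 1 (edF e))) (etaE 1 ord0).

Lemma natA a b (f : gfunctor (FG F (gn a)) (FG F (gn b))) (x : gfunctor (FG F (gn b)) G) :
  @alpha a (gfcomp x f) = gfcomp (@alpha b x) f.
Proof. exact: (Hnat f x). Qed.

Lemma L_V n (x : gfunctor (FG F (gn n)) G) i :
  hV (fh (@alpha n x)) (etaV n i) = phiV (hV (fh x) (etaV n i)).
Proof.
have E : ptF (hV (fh x) (etaV n i)) = gfcomp x (Th (fun _ : 'I_1 => i)).
  apply: gf_eq_eta => [v|e]; last by case: (I0_False e).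
  by rewrite /ptF ext_etaV /= ?Em_etaV.
by rewrite /phiV E natA /= ?Em_etaV.
Qed.

Definition s_e n (e : 'I_n) (k : 'I_2) : 'I_n.+1 :=
  if nat_of_ord k == 0 then widen_ord (leqnSn n) e else lift ord0 e.

Lemma Th_s_e n (e : 'I_n) : hE (fh (Th (s_e e))) (etaE 1 ord0) = etaE n e.
Proof. by apply: Th_edge. Qed.

Lemma L_E n (x : gfunctor (FG F (gn n)) G) (e : 'I_n) :
  hE (fh (@alpha n x)) (etaE n e) = phiE (hE (fh x) (etaE n e)).
Proof.
have E : edF (hE (fh x) (etaE n e)) = gfcomp x (Th (s_e e)).
  apply: gf_eq_eta => [v|k].
    rewrite /edF ext_etaV /= ?Em_etaV.
    case: v => [[|[|v]] Hv] //=.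
      by rewrite /edgV /s_e /= img_src.
    by rewrite /edgV /s_e /= img_tgt.
  have -> : k = ord0 by apply: ord1.
  rewrite /edF ext_etaE.
  change (hE (fh x) (etaE n e) = hE (fh x) (hE (fh (Th (s_e e))) (etaE 1 ord0))).
  by rewrite Th_s_e.
rewrite -{1}(Th_s_e e) /phiE E natA //.
Qed.

Lemma phi_src e : gsrc (phiE e) = phiV (gsrc e).
Proof. by rewrite /phiE img_src L_V /edF ext_etaV. Qed.

Lemma phi_tgt e : gtgt (phiE e) = phiV (gtgt e).
Proof. by rewrite /phiE img_tgt L_V /edF ext_etaV /= /edgV lift0. Qed.

Lemma Th_const_edge m (i : 'I_m.+1) (k : 'I_1) :
  hE (fh (Th (fun _ : 'I_2 => i))) (etaE 1 k) = gpd_id (etaV m i).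
Proof.
apply: Fthin; by rewrite ?img_src ?img_tgt ThV ?gpd_id_src ?gpd_id_tgt.
Qed.

Lemma phi_id v : phiE (gpd_id v) = gpd_id (phiV v).
Proof.
have E : edF (gpd_id v) = gfcomp (ptF v) (Th (fun _ : 'I_2 => (ord0 : 'I_1))).
  apply: gf_eq_eta => k.
    rewrite /edF ext_etaV.
    change (edgV (gpd_id v) k = hV (fh (ptF v)) (hV (fh (Th (fun _ : 'I_2 => (ord0 : 'I_1)))) (etaV 1 k))).
    rewrite ThV /ptF ext_etaV /=.
    by case: k => [[|k] Hk]; rewrite /edgV /= ?gpd_id_src ?gpd_id_tgt.
  rewrite /edF ext_etaE.
  change (gpd_id v = hE (fh (ptF v)) (hE (fh (Th (fun _ : 'I_2 => (ord0 : 'I_1)))) (etaE 1 k))).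
  by rewrite Th_const_edge (fid (ptF v)) /ptF ext_etaV.
rewrite /phiE E natA.
change (hE (fh (@alpha 0 (ptF v))) (hE (fh (Th (fun _ : 'I_2 => (ord0 : 'I_1)))) (etaE 1 ord0)) = gpd_id (phiV v)).
by rewrite Th_const_edge (fid (@alpha 0 (ptF v))).
Qed.

Definition s02 (k : 'I_2) : 'I_3 := if nat_of_ord k == 0 then ord0 else ord_max.

Lemma comp_eta2 : gtgt (etaE 2 ord0) = gsrc (etaE 2 ord_max).
Proof.
rewrite (htgt (fg_eta F (gn 2))) (hsrc (fg_eta F (gn 2))); congr (etaV 2 _); exact: val_inj.
Qed.

Lemma Th02 : hE (fh (Th s02)) (etaE 1 ord0) = gpd_comp (etaE 2 ord_max) (etaE 2 ord0).
Proof.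
apply: Fthin.
  rewrite img_src ThV gpd_comp_src ?comp_eta2 // (hsrc (fg_eta F (gn 2))).
  congr (etaV 2 _); exact: val_inj.
rewrite img_tgt ThV gpd_comp_tgt ?comp_eta2 // (htgt (fg_eta F (gn 2))).
congr (etaV 2 _); exact: val_inj.
Qed.

Lemma phi_comp f g : gtgt f = gsrc g -> phiE (gpd_comp g f) = gpd_comp (phiE g) (phiE f).
Proof.
move=> Hfg.
have [p [Hp0 Hpe]] := @path_ex G 2 (gsrc f) (fun k => if k is 0 then f else g)
   (fun _ => erefl) (fun k => if k is 0 then fun _ => Hfg else fun H => False_ind _ (notF H)).
pose w := fg_ext F p.
have E : edF (gpd_comp g f) = gfcomp w (Th s02).
  apply: gf_eq_eta => k.
    rewrite /edF ext_etaV.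
    change (edgV (gpd_comp g f) k = hV (fh w) (hV (fh (Th s02)) (etaV 1 k))).
    rewrite ThV /w ext_etaV.
    case: k => [[|[|k]] Hk] //; rewrite /edgV /s02 /=.
      by rewrite gpd_comp_src.
    rewrite gpd_comp_tgt //.
    have -> : (ord_max : 'I_3) = lift ord0 (ord_max : 'I_2) by apply: val_inj.
    by rewrite -(htgt p) (Hpe ord_max).
  rewrite /edF ext_etaE.
  change (gpd_comp g f = hE (fh w) (hE (fh (Th s02)) (etaE 1 k))).
  have -> : k = ord0 by apply: ord1.
  by rewrite Th02 (fcomp w comp_eta2) /w !ext_etaE !Hpe.
rewrite /phiE E natA.
change (hE (fh (@alpha 2 w)) (hE (fh (Th s02)) (etaE 1 ord0)) = gpd_comp (phiE g) (phiE f)).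
rewrite Th02 (fcomp (@alpha 2 w) comp_eta2) !L_E /w !ext_etaE !Hpe //.
Qed.

Definition phi_h : ghom G H := @GHom G H phiV phiE phi_src phi_tgt.
Definition phi : gfunctor G H := @GFunctor G H phi_h phi_id phi_comp.

Lemma dense_main : exists phi : gfunctor G H,
      (forall n x, @alpha n x = gfcomp phi x) /\
      (forall phi' : gfunctor G H,
          (forall n x, @alpha n x = gfcomp phi' x) -> phi' = phi).
Proof.
exists phi; split.
  move=> n x; apply: gf_eq_eta => [v|e]; by rewrite ?L_V ?L_E.
move=> phi' H'; apply: gfunctor_ext; apply: ghom_ext => [v|e] /=.
  by rewrite /phiV H' /= /ptF ext_etaV.
by rewrite /phiE H' /= /edF ext_etaE.
Qed.

End Dense.

Lemma KT_dense_holds : KT_dense F.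
Proof. move=> G H alpha Hnat; exact: dense_main Hnat. Qed.

Section Fwd.
Variable X : rpsh (AT F).
Variable G : groupoid.

Lemma nerve_fwd : nat_iso X (NKT F G) -> is_K_nerve (restrJ X).
Proof.
case=> gam [Hn Hb]; exists (gpd G).
exists (fun n (x : pob (restrJ X) n) => gcomp (fh (@gam n x)) (fg_eta F (gn n)) : pob (NK (gpd G)) n).
split.
  move=> a b f x /=.
  have -> : @gam a (pact (JT F f) x) = gfcomp (@gam b x) (Fmap F f) by exact: Hn.
  apply: ghom_ext => [v|e] /=; by rewrite /Fmap ?ext_etaV ?ext_etaE.
move=> n; case: (Hb n) => g c1 c2.
exists (fun p : pob (NK (gpd G)) n => g (fg_ext F p)).
  move=> x /=; rewrite -(fg_ext_unique (erefl (gcomp (fh (@gam n x)) (fg_eta F (gn n))))).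
  exact: c1.
by move=> p /=; rewrite c2 fg_ext_eta.
Qed.
End Fwd.

Definition edgmap (A : Type) (a b : A) (k : 'I_2) : A :=
  match nat_of_ord k with 0 => a | _ => b end.

Definition sel3 (A : Type) (a b c : A) (k : 'I_3) : A :=
  match nat_of_ord k with 0 => a | 1 => b | _ => c end.

Definition ptZ (Z : graph) (v : gV Z) : ghom (gn 0) Z :=
  @GHom (gn 0) Z (fun _ => v) (fun e => I0_elim _ e)
    (fun e => False_ind _ (I0_False e)) (fun e => False_ind _ (I0_False e)).

Lemma emap_s b (e : 'I_b) (k : 'I_1) :
  widen_ord (leqnSn b) e = edgmap (widen_ord (leqnSn b) e) (lift ord0 e) (widen_ord (leqnSn 1) k).
Proof. by case: k => [[|k] Hk]. Qed.

Lemma emap_t b (e : 'I_b) (k : 'I_1) :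
  lift ord0 e = edgmap (widen_ord (leqnSn b) e) (lift ord0 e) (lift ord0 k).
Proof. by rewrite /edgmap lift0. Qed.

Definition emap b (e : 'I_b) : ghom (gn 1) (gn b) :=
  @GHom (gn 1) (gn b) (edgmap (widen_ord (leqnSn b) e) (lift ord0 e)) (fun _ => e)
     (emap_s e) (emap_t e).

Section Bwd.
Variable X : rpsh (AT F).
Hypothesis HX : is_presheaf X.
Variable Z : graph.
Variable alpha : forall n, pob (restrJ X) n -> pob (NK Z) n.
Hypothesis Hal : natural alpha.
Hypothesis Hbij : forall n, bijective (@alpha n).

Definition act a b (t : gfunctor (FG F (gn a)) (FG F (gn b))) (x : pob X b) : pob X a :=
  @pact (AT F) X a b t x.

Definition al n (x : pob X n) : ghom (gn n) Z := @alpha n x.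

Lemma actC a b c (g : gfunctor (FG F (gn b)) (FG F (gn c)))
   (f : gfunctor (FG F (gn a)) (FG F (gn b))) x :
  act f (act g x) = act (gfcomp g f) x.
Proof. by rewrite /act (proj2 HX a b c g f x). Qed.

Lemma alJ a b (s : 'I_a.+1 -> 'I_b.+1) (f : ghom (gn a) (gn b)) (x : pob X b) :
  (forall k, hV f k = s k) -> al (act (Th s) x) = gcomp (al x) f.
Proof.
move=> Hs.
have -> : Th s = Fmap F f.
  rewrite JT_Th; congr Th; apply: functional_extensionality => k; by rewrite Hs.
exact: (Hal f x).
Qed.

Definition Vx m (x : pob X m) (i : 'I_m.+1) : gV Z :=
  hV (al (act (Th (fun _ : 'I_1 => i)) x)) ord0.
Definition Ex m (x : pob X m) (i j : 'I_m.+1) : gE Z :=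
  hE (al (act (Th (edgmap i j)) x)) ord0.

Lemma VxE m (x : pob X m) i : Vx x i = hV (al x) i.
Proof. by rewrite /Vx (alJ (f := @ptZ (gn m) i)). Qed.

Lemma EdgeE m (x : pob X m) (e : 'I_m) :
  Ex x (widen_ord (leqnSn m) e) (lift ord0 e) = hE (al x) e.
Proof. by rewrite /Ex (alJ (f := emap e)). Qed.

Lemma Ex_cast m (x : pob X m) i j i' j' :
  nat_of_ord i = nat_of_ord i' -> nat_of_ord j = nat_of_ord j' -> Ex x i j = Ex x i' j'.
Proof. by move=> /val_inj -> /val_inj ->. Qed.
Arguments Ex_cast {m x i j} i' j' _ _.

Lemma EdgeE' m (x : pob X m) i j (e : 'I_m) :
  nat_of_ord i = e -> nat_of_ord j = e.+1 -> Ex x i j = hE (al x) e.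
Proof. move=> H1 H2; rewrite -EdgeE; apply: Ex_cast => //; by rewrite lift0. Qed.
Arguments EdgeE' {m x i j} e _ _.

Lemma Vx_act n m (t : 'I_n.+1 -> 'I_m.+1) (x : pob X m) i :
  Vx (act (Th t) x) i = Vx x (t i).
Proof. by rewrite /Vx actC Th_comp. Qed.

Lemma Ex_act n m (t : 'I_n.+1 -> 'I_m.+1) (x : pob X m) i j :
  Ex (act (Th t) x) i j = Ex x (t i) (t j).
Proof.
rewrite /Ex actC Th_comp; congr (hE (al (act (Th _) x)) ord0).
by apply: functional_extensionality => -[[|k] Hk].
Qed.

Lemma Esrc m (x : pob X m) i j : gsrc (Ex x i j) = Vx x i.
Proof. by rewrite /Ex (hsrc (al _)) -VxE Vx_act. Qed.

Lemma Etgt m (x : pob X m) i j : gtgt (Ex x i j) = Vx x j.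
Proof. by rewrite /Ex (htgt (al _)) -VxE Vx_act /edgmap lift0. Qed.

Lemma al_inj n : injective (@al n).
Proof. by case: (Hbij n) => g c1 c2; exact: can_inj c1. Qed.

Lemma al_surj n (p : ghom (gn n) Z) : exists y : pob X n, al y = p.
Proof. by case: (Hbij n) => g c1 c2; exists (g p); exact: c2. Qed.

Lemma Xinj n (y y' : pob X n) : Vx y ord0 = Vx y' ord0 ->
  (forall e : 'I_n, Ex y (widen_ord (leqnSn n) e) (lift ord0 e) =
                    Ex y' (widen_ord (leqnSn n) e) (lift ord0 e)) -> y = y'.
Proof.
move=> H0 H1; apply: al_inj; apply: ghom_ext => [i|e]; last by rewrite -!EdgeE.
case: i => [[|k] Hk].
  have -> : Ordinal Hk = ord0 by apply: val_inj.
  by rewrite -!VxE.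
have Hk' : k < n by [].
have -> : Ordinal Hk = lift ord0 (Ordinal Hk') by apply: val_inj; rewrite /= ?lift0.
by rewrite -!(htgt (al _)) -!EdgeE H1.
Qed.

Lemma ex0 v : exists y : pob X 0, Vx y ord0 = v.
Proof. have [y Hy] := al_surj (@ptZ Z v); exists y; by rewrite VxE Hy. Qed.

Lemma ex1 f : exists y : pob X 1, Ex y ord0 ord_max = f.
Proof.
have [p [_ Hp]] := @path_ex Z 1 (gsrc f) (fun _ => f) (fun _ => erefl)
    (fun k H => False_ind _ (notF H)).
have [y Hy] := al_surj p; exists y; by rewrite (EdgeE' ord0) // Hy Hp.
Qed.

Lemma ex2 f g : gtgt f = gsrc g ->
  exists y : pob X 2, Ex y ord0 (inord 1) = f /\ Ex y (inord 1) ord_max = g.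
Proof.
move=> Hfg.
have [p [_ Hp]] := @path_ex Z 2 (gsrc f) (fun k => if k is 0 then f else g)
   (fun _ => erefl) (fun k => if k is 0 then fun _ => Hfg else fun H => False_ind _ (notF H)).
have [y Hy] := al_surj p; exists y; split.
  by rewrite (EdgeE' ord0) ?inordK // Hy Hp.
by rewrite (EdgeE' ord_max) ?inordK // Hy Hp.
Qed.

Lemma ex3 f g h : gtgt f = gsrc g -> gtgt g = gsrc h ->
  exists y : pob X 3, [/\ Ex y ord0 (inord 1) = f, Ex y (inord 1) (inord 2) = g &
                         Ex y (inord 2) ord_max = h].
Proof.
move=> Hfg Hgh.
have [p [_ Hp]] := @path_ex Z 3 (gsrc f) (fun k => match k with 0 => f | 1 => g | _ => h end)
   (fun _ => erefl)
   (fun k => match k with 0 => fun _ => Hfg | 1 => fun _ => Hgh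
             | _ => fun H => False_ind _ (notF H) end).
have [y Hy] := al_surj p; exists y; split.
- by rewrite (EdgeE' ord0) ?inordK // Hy Hp.
- by rewrite (EdgeE' (inord 1)) ?inordK // Hy Hp inordK.
- by rewrite (EdgeE' ord_max) ?inordK // Hy Hp.
Qed.

Definition pick0 v : pob X 0 := proj1_sig (constructive_indefinite_description _ (ex0 v)).
Lemma pick0_spec v : Vx (pick0 v) ord0 = v.
Proof. exact: (proj2_sig (constructive_indefinite_description _ (ex0 v))). Qed.

Definition pick1 f : pob X 1 := proj1_sig (constructive_indefinite_description _ (ex1 f)).
Lemma pick1_spec f : Ex (pick1 f) ord0 ord_max = f.
Proof. exact: (proj2_sig (constructive_indefinite_description _ (ex1 f))). Qed.

Definition pick2 f g (H : gtgt f = gsrc g) : pob X 2 :=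
  proj1_sig (constructive_indefinite_description _ (ex2 H)).
Lemma pick2_spec f g (H : gtgt f = gsrc g) :
  Ex (pick2 H) ord0 (inord 1) = f /\ Ex (pick2 H) (inord 1) ord_max = g.
Proof. exact: (proj2_sig (constructive_indefinite_description _ (ex2 H))). Qed.

Definition idG v : gE Z := Ex (pick0 v) ord0 ord0.
Definition invG f : gE Z := Ex (pick1 f) ord_max ord0.
Definition compG (g f : gE Z) : gE Z :=
  match excluded_middle_informative (gtgt f = gsrc g) with
  | left H => Ex (pick2 H) ord0 ord_max
  | right _ => f
  end.

Lemma Eid m (x : pob X m) i : idG (Vx x i) = Ex x i i.
Proof.
rewrite /idG.
have -> : pick0 (Vx x i) = act (Th (fun _ : 'I_1 => i)) x.
  apply: Xinj; last by move=> e; case: (I0_False e).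
  by rewrite pick0_spec Vx_act.
by rewrite Ex_act.
Qed.

Lemma Einv m (x : pob X m) i j : invG (Ex x i j) = Ex x j i.
Proof.
rewrite /invG.
have H1 := pick1_spec (Ex x i j).
have -> : pick1 (Ex x i j) = act (Th (edgmap i j)) x.
  apply: Xinj.
    by rewrite -(Esrc (pick1 (Ex x i j)) ord0 ord_max) H1 Esrc Vx_act.
  move=> e; have -> : e = ord0 by apply: ord1.
  rewrite (Ex_cast ord0 ord_max) // H1 Ex_act.
  by rewrite /edgmap lift0.
by rewrite Ex_act.
Qed.

Lemma Ecomp m (x : pob X m) i j k : compG (Ex x j k) (Ex x i j) = Ex x i k.
Proof.
rewrite /compG; case: excluded_middle_informative => [H|H]; last first.
  by case: H; rewrite Etgt Esrc.
have [H1 H2] := pick2_spec H.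
have -> : pick2 H = act (Th (sel3 i j k)) x.
  apply: Xinj.
    by rewrite -(Esrc (pick2 H) ord0 (inord 1)) H1 Esrc Vx_act.
  case=> [[|[|e]] He] //.
    rewrite (Ex_cast ord0 (inord 1)) ?inordK // H1 Ex_act.
    by rewrite /sel3 lift0.
  rewrite (Ex_cast (inord 1) ord_max) ?inordK // H2 Ex_act.
  by rewrite /sel3 lift0.
by rewrite Ex_act.
Qed.

Definition Zg : graph := @Graph (gV Z) (gE Z) (@gsrc Z) (@gtgt Z).

Lemma G_id_src v : gsrc (idG v) = v.
Proof. by rewrite /idG Esrc pick0_spec. Qed.
Lemma G_id_tgt v : gtgt (idG v) = v.
Proof. by rewrite /idG Etgt pick0_spec. Qed.
Lemma G_comp_src f g : gtgt f = gsrc g -> gsrc (compG g f) = gsrc f.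
Proof.
move=> _; rewrite /compG; case: excluded_middle_informative => [H|//].
have [H1 H2] := pick2_spec H.
by rewrite Esrc -(Esrc (pick2 H) ord0 (inord 1)) H1.
Qed.
Lemma G_comp_tgt f g : gtgt f = gsrc g -> gtgt (compG g f) = gtgt g.
Proof.
move=> Hfg; rewrite /compG; case: excluded_middle_informative => [H|//].
have [H1 H2] := pick2_spec H.
by rewrite Etgt -(Etgt (pick2 H) (inord 1) ord_max) H2.
Qed.
Lemma G_compA f g h : gtgt f = gsrc g -> gtgt g = gsrc h ->
  compG h (compG g f) = compG (compG h g) f.
Proof.
move=> H1 H2; have [y [Hf Hg Hh]] := ex3 H1 H2.
by rewrite -Hf -Hg -Hh !Ecomp.
Qed.
Lemma G_id_l f : compG (idG (gtgt f)) f = f.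
Proof. have [y <-] := ex1 f; by rewrite Etgt Eid Ecomp. Qed.
Lemma G_id_r f : compG f (idG (gsrc f)) = f.
Proof. have [y <-] := ex1 f; by rewrite Esrc Eid Ecomp. Qed.
Lemma G_inv_src f : gsrc (invG f) = gtgt f.
Proof. have [y <-] := ex1 f; by rewrite Einv Esrc Etgt. Qed.
Lemma G_inv_tgt f : gtgt (invG f) = gsrc f.
Proof. have [y <-] := ex1 f; by rewrite Einv Esrc Etgt. Qed.
Lemma G_inv_l f : compG (invG f) f = idG (gsrc f).
Proof. have [y <-] := ex1 f; by rewrite Einv Ecomp Esrc Eid. Qed.
Lemma G_inv_r f : compG f (invG f) = idG (gtgt f).
Proof. have [y <-] := ex1 f; by rewrite Einv Ecomp Etgt Eid. Qed.

Definition GX : groupoid :=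
  @Groupoid Zg idG compG invG G_id_src G_id_tgt G_comp_src G_comp_tgt G_compA
     G_id_l G_id_r G_inv_src G_inv_tgt G_inv_l G_inv_r.

Definition recast n (p : ghom (gn n) Z) : ghom (gn n) GX :=
  @GHom (gn n) GX (hV p) (hE p) (hsrc p) (htgt p).
Definition unrecast n (p : ghom (gn n) GX) : ghom (gn n) Z :=
  @GHom (gn n) Z (hV p) (hE p) (hsrc p) (htgt p).

Definition beta n (x : pob X n) : pob (NKT F GX) n := fg_ext F (recast (al x)).

Section Psi.
Variables (m : nat) (x : pob X m).
Definition Psi_h : ghom (CodG 'I_m.+1) GX :=
  @GHom (CodG 'I_m.+1) GX (Vx x) (fun p => Ex x p.1 p.2) (fun p => Esrc x p.1 p.2)
     (fun p => Etgt x p.1 p.2).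
Lemma Psi_id i : hE Psi_h (gpd_id (g0:=Cod 'I_m.+1) i) = gpd_id (g0:=GX) (hV Psi_h i).
Proof. exact: (esym (Eid x i)). Qed.
Lemma Psi_comp (p q : gE (Cod 'I_m.+1)) : gtgt p = gsrc q ->
  hE Psi_h (gpd_comp q p) = gpd_comp (hE Psi_h q) (hE Psi_h p).
Proof. case: p => a b; case: q => c d /= ->; exact: (esym (Ecomp x a c d)). Qed.
Definition Psi : gfunctor (Cod 'I_m.+1) GX := GFunctor Psi_id Psi_comp.

Lemma beta_Psi : beta x = gfcomp Psi (Em m).
Proof.
apply: gf_eq_eta => [v|e].
  by rewrite /beta ext_etaV /= Em_etaV VxE.
by rewrite /beta ext_etaE /= (ext_etaE (G:=Cod 'I_m.+1)) /= EdgeE.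
Qed.

Lemma beta_Pedge (i j : 'I_m.+1) : hE (fh (beta x)) (Pedge (i, j)) = Ex x i j.
Proof.
rewrite beta_Psi /=.
have -> : hE (fh (Em m)) (Pedge (i, j)) = (i, j).
  apply: cod_thin.
    by rewrite (hsrc (fh (Em m))) Pedge_src Em_etaV.
  by rewrite (htgt (fh (Em m))) Pedge_tgt Em_etaV.
by [].
Qed.
End Psi.

Lemma beta_nat : natural beta.
Proof.
move=> a b th x.
change (beta (act th x) = gfcomp (beta x) th).
pose s := fun i => hV (fh (Em b)) (hV (fh th) (hV (fg_eta F (gn a)) i)).
have -> : th = Th s by apply: Th_eq => i; rewrite /s PE_V.
apply: gf_eq_eta => [v|e].
  rewrite /beta ext_etaV /=.
  change (hV (al (act (Th s) x)) v = hV (fh (fg_ext F (recast (al x)))) (hV (fh (Th s)) (hV (fg_eta F (gn a)) v))).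
  by rewrite ThV ext_etaV /= -VxE Vx_act VxE.
rewrite /beta ext_etaE /=.
change (hE (al (act (Th s) x)) e = hE (fh (beta x)) (hE (fh (Th s)) (hE (fg_eta F (gn a)) e))).
rewrite -EdgeE Ex_act.
have -> : hE (fh (Th s)) (hE (fg_eta F (gn a)) e) =
          Pedge (s (widen_ord (leqnSn a) e), s (lift ord0 e)).
  by rewrite /= (ext_etaE (G:=Cod 'I_a.+1)).
by rewrite beta_Pedge.
Qed.

Lemma beta_bij n : bijective (@beta n).
Proof.
case: (Hbij n) => g c1 c2.
exists (fun p : pob (NKT F GX) n => g (unrecast (gcomp (fh p) (fg_eta F (gn n))))).
  move=> x; rewrite /beta fg_ext_eta.
  have -> : unrecast (recast (al x)) = al x by apply: ghom_ext.
  exact: c1.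
move=> p; rewrite /beta /al c2.
have -> : recast (unrecast (gcomp (fh p) (fg_eta F (gn n)))) = gcomp (fh p) (fg_eta F (gn n))
  by apply: ghom_ext.
exact/esym/fg_ext_unique.
Qed.

Lemma nerve_bwd : is_KT_nerve X.
Proof. exists GX; exists beta; split; [exact: beta_nat | exact: beta_bij]. Qed.

End Bwd.

Lemma nervous_holds : Delta0_nervous F.
Proof.
split; first exact: KT_dense_holds.
move=> X HX; split.
  by case=> G HG; apply: (nerve_fwd HG).
case=> Z [al [Hn Hb]]; exact: (nerve_bwd HX Hn Hb).
Qed.

Definition Xc : graph := @Graph nat bool (fun e => if e then 2 else 0) (fun _ => 1).

Definition okp (p : nat * nat) : bool := (p.1 == p.2) || (p.1 + p.2 != 2).

Definition Yc : graph := @Graph nat {p : nat * nat | okp p} (fun e => (sval e).1) (fun e => (sval e).2).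

Lemma okx n (x : ghom (gn n) Xc) i j : okp (hV x i, hV x j).
Proof.
case: n x i j => [|[|n]] x i j.
- have -> : i = j by rewrite (ord1 i) (ord1 j).
  by rewrite /okp eqxx.
- have H1 : hV x (lift ord0 ord0) = 1 by rewrite -(htgt x).
  have H0 : hV x (widen_ord (leqnSn 1) ord0) = if hE x ord0 then 2 else 0 by rewrite -(hsrc x).
  have E0 : widen_ord (leqnSn 1) ord0 = ord0 by apply: val_inj.
  have E1 : lift ord0 (ord0 : 'I_1) = (ord_max : 'I_2) by apply: val_inj.
  rewrite E0 in H0; rewrite E1 in H1.
  have Hi : forall k : 'I_2, k = ord0 \/ k = ord_max.
    case=> [[|[|k]] Hk]; [left|right|by []]; exact: val_inj.
  by case: (Hi i) => ->; case: (Hi j) => ->; rewrite /okp ?H0 ?H1 /=; case: (hE x ord0).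
- exfalso.
  have e0 : 0 < n.+2 by [].
  have e1 : 1 < n.+2 by [].
  have H1 := htgt x (Ordinal e0).
  have H2 := hsrc x (Ordinal e1).
  have E : lift ord0 (Ordinal e0) = widen_ord (leqnSn n.+2) (Ordinal e1) by apply: val_inj.
  rewrite /= E -H2 /= in H1.
  by case: (hE x (Ordinal e1)) H1.
Qed.

Definition iota n (x : ghom (gn n) Xc) : ghom (CodG 'I_n.+1) Yc :=
  @GHom (CodG 'I_n.+1) Yc (hV x) (fun p => exist _ (hV x p.1, hV x p.2) (okx x p.1 p.2))
    (fun _ => erefl) (fun _ => erefl).

Definition cc n (x : ghom (gn n) Xc) : ghom (Tob F (gn n)) Yc := gcomp (iota x) (fh (Em n)).

Lemma Em_edge n (o : gE (FG F (gn n))) :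
  hE (fh (Em n)) o = (hV (fh (Em n)) (gsrc o), hV (fh (Em n)) (gtgt o)).
Proof.
apply: cod_thin; by rewrite ?(hsrc (fh (Em n))) ?(htgt (fh (Em n))).
Qed.

Lemma Em_Th n m (s : 'I_n.+1 -> 'I_m.+1) o :
  hV (fh (Em m)) (hV (fh (Th s)) o) = s (hV (fh (Em n)) o).
Proof. by rewrite -{1}[o](PE_V (m:=n)) ThV Em_etaV. Qed.

Lemma cc_cocone n m (f : ghom (gn n) (gn m)) (y : ghom (gn m) Xc) :
  cc (gcomp y f) = gcomp (cc y) (Tmap F f).
Proof.
rewrite /cc /Tmap JT_Th.
apply: ghom_ext => [o|o] /=; first by rewrite Em_Th.
apply: val_inj => /=.
by rewrite !Em_edge /= Pedge_src Pedge_tgt !Em_etaV.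
Qed.

Lemma u_vertex (u : ghom (Tob F Xc) Yc)
  (Hu : forall n (x : ghom (gn n) Xc), gcomp u (Tmap F x) = cc x) v :
  hV u (hV (fg_eta F Xc) v) = v.
Proof.
have := f_equal (fun h => hV h (hV (fg_eta F (gn 0)) ord0)) (Hu 0 (@ptZ Xc v)).
by rewrite /= /Tmap /Fmap ext_etaV /= ?Em_etaV.
Qed.

Definition hbad : gE (FG F Xc) :=
  gpd_comp (gpd_inv (hE (fg_eta F Xc) true)) (hE (fg_eta F Xc) false).

Lemma hbad_comp : gtgt (hE (fg_eta F Xc) false) = gsrc (gpd_inv (hE (fg_eta F Xc) true)).
Proof. by rewrite gpd_inv_src !(htgt (fg_eta F Xc)). Qed.

Lemma hbad_src : gsrc hbad = hV (fg_eta F Xc) 0.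
Proof. by rewrite /hbad gpd_comp_src ?hbad_comp // (hsrc (fg_eta F Xc)). Qed.

Lemma hbad_tgt : gtgt hbad = hV (fg_eta F Xc) 2.
Proof. by rewrite /hbad gpd_comp_tgt ?hbad_comp // gpd_inv_tgt (hsrc (fg_eta F Xc)). Qed.

Lemma no_edge (e : gE Yc) : gsrc e = 0 -> gtgt e = 2 -> False.
Proof. by case: e => [[a b] Hab] /= Ha Hb; subst; rewrite /okp in Hab. Qed.

Lemma not_induced : ~ Delta0_induced F.
Proof.
move=> H.
have [u [Hu _]] := H Xc Yc cc cc_cocone.
apply: (@no_edge (hE u hbad)).
  by rewrite (hsrc u) hbad_src u_vertex.
by rewrite (htgt u) hbad_tgt u_vertex.
Qed.

Lemma NK_presheaf (Y : graph) : is_presheaf (NK Y).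
Proof. by split => *; apply: ghom_ext. Qed.

Lemma not_arities : ~ has_arities F.
Proof.
move=> H.
pose c := fun n (x : ghom (gn n) Xc) k (g : pob (NK (Tob F (gn n))) k) =>
   (gcomp (cc x) g : pob (NK Yc) k).
have Hc1 : forall n x, natural (c n x) by move=> n x a b f g; apply: ghom_ext.
have Hc2 : forall n m (f : ghom (gn n) (gn m)) (y : ghom (gn m) Xc) k
            (g : ghom (gn k) (Tob F (gn n))),
        c n (gcomp y f) k g = c m y k (gcomp (Tmap F f) g).
  by move=> n m f y k g; rewrite /c cc_cocone; apply: ghom_ext.
have [u [Hun [Hu _]]] := H Xc (NK Yc) (NK_presheaf Yc) c Hc1 Hc2.
have [g0 [Hg0 Hge]] := @path_ex (Tob F Xc) 1 (gsrc hbad) (fun _ => hbad) (fun _ => erefl)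
    (fun k H => False_ind _ (notF H)).
have Hvert : forall (i : 'I_2) v, hV g0 i = hV (fg_eta F Xc) v ->
    hV (@u 1 g0) i = v.
  move=> i v Hi.
  have N := Hun 0 1 (@ptZ (gn 1) i) g0.
  have E : (pact (r := NK (Tob F Xc)) (@ptZ (gn 1) i) g0 : ghom (gn 0) (Tob F Xc)) =
           gcomp (Tmap F (@ptZ Xc v)) (@ptZ _ (hV (fg_eta F (gn 0)) ord0)).
    apply: ghom_ext => [k|k]; last by case: (I0_False k).
    by rewrite /= Hi /Tmap /Fmap ext_etaV.
  rewrite E Hu in N.
  have := f_equal (fun h : ghom (gn 0) Yc => hV h ord0) N.
  by rewrite /= /c /= ?Em_etaV => ->.
apply: (@no_edge (hE (@u 1 g0) ord0)).
  rewrite (hsrc (@u 1 g0)); apply: Hvert.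
  by rewrite -(hsrc g0) Hge hbad_src.
rewrite (htgt (@u 1 g0)); apply: Hvert.
by rewrite -(htgt g0) Hge hbad_tgt.
Qed.

End Free.

Theorem proposition7p4 (F : free_groupoid) :
  Delta0_nervous F /\ ~ Delta0_induced F /\ ~ has_arities F.
Proof.
split; [exact: nervous_holds | split; [exact: not_induced | exact: not_arities]].
Qed.
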